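(* Assume the standing setting, and let $e$ be an edge of type I. Then there exist partitions $(A_1,A_2)$ of $U$ and $(B_1,B_2)$ of $W$ such that $|B_1|=|A_1|+1$, $|A_2|=|B_2|+1$, $E_G(A_2)=\{e_1\}$, $E_G(B_1)=\{e_2\}$ and $E_G[A_1,B_2]=\{e\}$; moreover, for any such partitions, $B_1$ and $A_2$ are barriers of $G-e$.
   Context: Graphs may have multiple edges but no loops. An edge is admissible if it lies in some perfect matching; a connected graph with at least two vertices is matching covered if every edge is admissible; an edge $e$ of a matching covered graph $G$ is removable if $G-e$ is matching covered, and nonremovable otherwise. A brick is a 3-connected nonbipartite graph $G$ such that $G-x-y$ has a perfect matching for all distinct $x,y$. A nonbipartite matching covered graph $G$ is near-bipartite if it has a pair of edges $\{e_1,e_2\}$ (a removable doubleton) such that $G-\{e_1,e_2\}$ is bipartite matching covered. For a graph with a perfect matching, a nonempty vertex set $S$ is a barrier if the number of odd components of $G-S$ equals $|S|$. $E_G(X)$ is the set of edges with both ends in $X$, $E_G[X,Y]$ the set of edges with one end in $X$ and the other in $Y$. Standing setting: $G$ is a near-bipartite brick with removable doubleton $\{e_1,e_2\}$, $H=G-\{e_1,e_2\}$, and $(U,W)$ is the bipartition of $H$, labelled so that both ends of $e_1$ lie in $U$ and both ends of $e_2$ lie in $W$. A nonremovable edge $e\notin\{e_1,e_2\}$ of $G$ is of type I if $e$ is removable in $H$, and of type II if $e$ is nonremovable in $H$. *)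

(* Defs.v *)
(* A loopless multigraph is given by a finite vertex type V,
   a finite edge type E and endpoint maps src dst : E -> V (orientation is
   irrelevant).  Spanning subgraphs are described by their edge set F : {set E};
   the vertex set is always all of V unless a vertex set S is given. *)
From mathcomp Require Import all_boot.
Set Implicit Arguments. Unset Strict Implicit. Unset Printing Implicit Defensive.

Section Graphs.
Variables (V E : finType) (src dst : E -> V).

Definition loopless := forall f : E, src f != dst f.

Definition incident (f : E) (v : V) : bool := (src f == v) || (dst f == v).

Definition inside (S : {set V}) (f : E) : bool := (src f \in S) && (dst f \in S).

Definition adjIn (F : {set E}) (S : {set V}) : rel V := fun u v =>
  [&& u \in S, v \in S &
      [exists f in F, ((src f == u) && (dst f == v)) || ((src f == v) && (dst f == u))]].

Definition connected_on (F : {set E}) (S : {set V}) : Prop :=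
  forall u v, u \in S -> v \in S -> connect (adjIn F S) u v.

Definition perfect_matching_on (F : {set E}) (S : {set V}) (M : {set E}) : Prop :=
  M \subset F /\ (forall f, f \in M -> inside S f) /\
  (forall v, v \in S -> #|[set f in M | incident f v]| = 1).

Definition perfect_matching (F : {set E}) (M : {set E}) :=
  perfect_matching_on F [set: V] M.

Definition has_perfect_matching_on (F : {set E}) (S : {set V}) : Prop :=
  exists M, perfect_matching_on F S M.

Definition admissible (F : {set E}) (f : E) : Prop :=
  exists M, perfect_matching F M /\ f \in M.

Definition matching_covered (F : {set E}) : Prop :=
  connected_on F [set: V] /\ 2 <= #|V| /\ (forall f, f \in F -> admissible F f).

Definition removable (F : {set E}) (f : E) : Prop :=
  f \in F /\ matching_covered (F :\ f).

Definition nonremovable (F : {set E}) (f : E) : Prop :=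
  f \in F /\ ~ matching_covered (F :\ f).

Definition bipartite (F : {set E}) : Prop :=
  exists X : {set V}, forall f, f \in F -> (src f \in X) != (dst f \in X).

Definition three_connected (F : {set E}) : Prop :=
  4 <= #|V| /\ forall X : {set V}, #|X| <= 2 -> connected_on F (~: X).

Definition brick (F : {set E}) : Prop :=
  three_connected F /\ ~ bipartite F /\
  forall x y : V, x != y -> has_perfect_matching_on F (~: [set x; y]).

Definition removable_doubleton (F : {set E}) (e1 e2 : E) : Prop :=
  e1 \in F /\ e2 \in F /\ e1 != e2 /\
  bipartite (F :\: [set e1; e2]) /\ matching_covered (F :\: [set e1; e2]).

Definition edges_in (F : {set E}) (X : {set V}) : {set E} :=
  [set f in F | inside X f].

Definition edges_between (F : {set E}) (X Y : {set V}) : {set E} :=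
  [set f in F | ((src f \in X) && (dst f \in Y)) || ((src f \in Y) && (dst f \in X))].

Definition components_minus (F : {set E}) (S : {set V}) : {set {set V}} :=
  [set [set u | (u \in ~: S) && connect (adjIn F (~: S)) v u] | v in ~: S].

Definition odd_components (F : {set E}) (S : {set V}) : nat :=
  #|[set C in components_minus F S | odd #|C|]|.

Definition barrier (F : {set E}) (S : {set V}) : Prop :=
  (exists M, perfect_matching F M) /\ S != set0 /\ odd_components F S = #|S|.

End Graphs.

(* Main.v *)
Require Import Defs.
From mathcomp Require Import all_boot.
From mathcomp Require Import zify.
Set Implicit Arguments. Unset Strict Implicit. Unset Printing Implicit Defensive.

Section Hall.
Variable T : finType.

Definition nbh (r : rel T) (X : {set T}) : {set T} := [set y | [exists x in X, r x y]].

Lemma nbhU r (X Y : {set T}) : nbh r (X :|: Y) = nbh r X :|: nbh r Y.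
Proof.
apply/setP=> y; rewrite !inE; apply/existsP/orP.
  by case=> x /andP[]; rewrite inE => /orP[] Hx Hr; [left|right]; apply/existsP; exists x; rewrite Hx.
by case=> /existsP[x /andP[Hx Hr]]; exists x; rewrite inE Hx ?orbT.
Qed.

Lemma nbhS r (X Y : {set T}) : X \subset Y -> nbh r X \subset nbh r Y.
Proof.
move=> /subsetP sXY; apply/subsetP=> y; rewrite !inE => /existsP[x /andP[Hx Hr]].
by apply/existsP; exists x; rewrite sXY.
Qed.

Lemma hall (y0 : T) n : forall (r : rel T) (A : {set T}), #|A| <= n ->
  (forall X : {set T}, X \subset A -> #|X| <= #|nbh r X|) ->
  exists f : T -> T, {in A &, injective f} /\ forall x, x \in A -> r x (f x).
Proof.
elim: n => [|n IH] r A HA Hh.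
  have A0 : A = set0 by apply/eqP; rewrite -cards_eq0; lia.
  exists (fun _ => y0); split=> [x y|x]; by rewrite A0 inE.
case: (boolP [exists X : {set T}, [&& X \subset A, X != set0, X != A & #|nbh r X| <= #|X|]]).
- case/existsP=> X /and4P[sXA nX0 nXA hX].
  have pXA : X \proper A by rewrite properEneq nXA.
  have cX : #|X| <= n.
    by have := proper_card pXA; lia.
  have [f1 [i1 r1]] := IH r X cX (fun Z sZ => Hh Z (subset_trans sZ sXA)).
  pose r' := fun x y => r x y && (y \notin nbh r X).
  have cAX : #|A :\: X| <= n.
    rewrite cardsDS //. have : 0 < #|X| by rewrite card_gt0. lia.
  have H2 : forall Z : {set T}, Z \subset A :\: X -> #|Z| <= #|nbh r' Z|.
    move=> Z sZ.
    have e1 : nbh r' Z = nbh r Z :\: nbh r X.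
      apply/setP=> y; rewrite inE [in RHS]inE [y \in nbh r Z]inE /r'.
      case: (boolP (y \in nbh r X)) => Hn /=.
        by apply/negbTE/existsP; case=> x /andP[_ /andP[_]].
      by apply/eq_existsb => x; rewrite andbT.
    have dZX : [disjoint Z & X].
      by case/subsetDP: sZ.
    have sZA : Z \subset A := subset_trans sZ (subsetDl _ _).
    have := Hh (Z :|: X); rewrite subUset sZA sXA => /(_ isT).
    rewrite nbhU e1 cardsU (disjoint_setI0 dZX) cards0 subn0.
    have := cardsID (nbh r X) (nbh r Z). rewrite cardsU.
    have := subset_leq_card (subsetIr (nbh r Z) (nbh r X)). lia.
  have [f2 [i2 r2]] := IH r' (A :\: X) cAX H2.
  exists (fun x => if x \in X then f1 x else f2 x); split.
    move=> x y Hx Hy /=.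
    case: (boolP (x \in X)) => Hx'; case: (boolP (y \in X)) => Hy'.
    + exact: i1.
    + move=> E; have := r2 y; rewrite inE Hy' Hy => /(_ isT) /andP[_].
      by rewrite -E inE; move/negP => H; exfalso; apply: H; apply/existsP; exists x; rewrite Hx' r1.
    + move=> E; have := r2 x; rewrite inE Hx' Hx => /(_ isT) /andP[_].
      by rewrite E inE; move/negP => H; exfalso; apply: H; apply/existsP; exists y; rewrite Hy' r1.
    + by apply: i2; rewrite inE ?Hx' ?Hy'.
  move=> x Hx; case: ifP => Hx'; first exact: r1.
  by have := r2 x; rewrite inE Hx' Hx => /(_ isT) /andP[].
- move=> Hno.
  case: (set_0Vmem A) => [A0|[a Ha]].
    exists (fun _ => y0); split=> [x y|x]; by rewrite A0 inE.
  have : 0 < #|nbh r [set a]|.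
    have := Hh [set a]; rewrite sub1set Ha cards1 => /(_ isT); lia.
  rewrite card_gt0 => /set0Pn[b]; rewrite inE => /existsP[a' /andP[]]; rewrite inE => /eqP -> Hab.
  pose r' := fun x y => r x y && (y != b).
  have cA : #|A :\ a| <= n by have := cardsD1 a A; rewrite Ha; lia.
  have H2 : forall Z : {set T}, Z \subset A :\ a -> #|Z| <= #|nbh r' Z|.
    move=> Z sZ.
    case: (set_0Vmem Z) => [->|[z Hz]]; first by rewrite cards0.
    have sZA : Z \subset A by apply: subset_trans sZ (subsetDl _ _).
    have nZA : Z != A.
      apply/eqP=> E; have := subsetP sZ a; rewrite E Ha !inE eqxx; by move/(_ isT).
    have nZ0 : Z != set0 by apply/set0Pn; exists z.
    have hZ : #|Z| < #|nbh r Z|.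
      rewrite ltnNge; apply/negP=> h; move/negP: Hno; apply; apply/existsP; exists Z.
      by rewrite sZA nZ0 nZA h.
    have : nbh r Z \subset b |: nbh r' Z.
      apply/subsetP=> y; rewrite !inE => /existsP[x /andP[Hx Hr]].
      case: (y =P b) => //= /eqP nb; apply/existsP; exists x; by rewrite Hx /r' Hr nb.
    move/subset_leq_card; rewrite cardsU1. case: (b \in nbh r' Z); lia.
  have [f2 [i2 r2]] := IH r' (A :\ a) cA H2.
  have inA' : forall x, x \in A -> x != a -> x \in A :\ a.
    by move=> x Hx nx; rewrite !inE nx Hx.
  exists (fun x => if x == a then b else f2 x); split.
    move=> x y Hx Hy /=.
    case: (x =P a) => [->|/eqP nx]; case: (y =P a) => [->|/eqP ny] //.
    + move=> E; have /andP[_] := r2 y (inA' y Hy ny).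
      by rewrite -E eqxx.
    + move=> E; have /andP[_] := r2 x (inA' x Hx nx).
      by rewrite E eqxx.
    + by apply: i2; apply: inA'.
  move=> x Hx; case: (x =P a) => [->|/eqP nx] //.
  by have /andP[] := r2 x (inA' x Hx nx).
Qed.
End Hall.
Set Implicit Arguments. Unset Strict Implicit. Unset Printing Implicit Defensive.

Lemma invol_even (T : finType) (g : T -> T) :
  (forall x, g (g x) = x) -> (forall x, g x != x) ->
  forall n (C : {set T}), #|C| <= n -> (forall x, x \in C -> g x \in C) -> ~~ odd #|C|.
Proof.
move=> gg gx; elim=> [|n IH] C HC cl.
  by have -> : #|C| = 0 by lia.
case: (set_0Vmem C) => [->|[x Hx]]; first by rewrite cards0.
pose C' := C :\: [set x; g x].
have sub : [set x; g x] \subset C by rewrite subUset !sub1set Hx cl.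
have c2 : #|[set x; g x]| = 2 by rewrite cards2 eq_sym gx.
have eC : #|C'| = #|C| - 2 by rewrite cardsDS // c2.
have hC : 2 <= #|C| by rewrite -c2 subset_leq_card.
have cl' : forall y, y \in C' -> g y \in C'.
  move=> y; rewrite !inE => /andP[ny Hy]; rewrite cl // andbT.
  apply/negP=> /orP[/eqP E|/eqP E].
    by move/negP: ny; apply; rewrite -E gg eqxx orbT.
  by move/negP: ny; apply; have := f_equal g E; rewrite !gg => ->; rewrite eqxx.
have := IH C' ltac:(lia) cl'.
have -> : #|C| = #|C'|.+2 by lia.
by rewrite !oddS negbK.
Qed.

Section Match.
Variables (V E : finType) (src dst : E -> V).
Hypothesis Hll : loopless src dst.

Definition joins (f : E) (u w : V) :=
  ((src f == u) && (dst f == w)) || ((src f == w) && (dst f == u)).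

Lemma pm_card1 (F M : {set E}) v f :
  f \in M -> incident src dst f v -> (forall g, g \in M -> incident src dst g v -> g = f) ->
  #|[set g in M | incident src dst g v]| = 1.
Proof.
move=> fM fv U; apply/eqP/cards1P; exists f; apply/setP=> g; rewrite !inE.
apply/andP/eqP; first by case=> ??; apply: U.
by move=> ->; rewrite fM fv.
Qed.

Variables (F M : {set E}) (e0 : E).
Hypothesis HM : perfect_matching src dst F M.

Lemma pm_uniq v f g : f \in M -> g \in M -> incident src dst f v -> incident src dst g v -> f = g.
Proof.
case: HM => _ [_ H] fM gM fv gv.
have /cards1P[h Eh] : #|[set f in M | incident src dst f v]| == 1 by rewrite H.
have : f \in [set h] by rewrite -Eh inE fM fv.
have : g \in [set h] by rewrite -Eh inE gM gv.
by rewrite !inE => /eqP -> /eqP ->.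
Qed.

Definition edgeAt v := odflt e0 [pick f in M | incident src dst f v].

Lemma edgeAt_spec v : edgeAt v \in M /\ incident src dst (edgeAt v) v.
Proof.
case: HM => _ [_ H].
have /cards1P[h Eh] : #|[set f in M | incident src dst f v]| == 1 by rewrite H.
have : h \in [set f in M | incident src dst f v] by rewrite Eh inE.
rewrite inE => /andP[hM hv].
rewrite /edgeAt; case: pickP => [f /andP[]|/(_ h)] //=.
by rewrite hM hv.
Qed.

Lemma edgeAt_uniq v f : f \in M -> incident src dst f v -> f = edgeAt v.
Proof. by case: (edgeAt_spec v) => ?? ??; apply: (@pm_uniq v). Qed.

Definition mate v := if src (edgeAt v) == v then dst (edgeAt v) else src (edgeAt v).

Lemma mate_joins v : joins (edgeAt v) v (mate v).
Proof.
case: (edgeAt_spec v) => _; rewrite /incident /mate /joins.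
case: (src _ =P v) => [->|ns] /=; first by rewrite !eqxx.
by move=> ->; rewrite eqxx.
Qed.

Lemma joins_inc1 f u w : joins f u w -> incident src dst f u.
Proof. by rewrite /joins /incident => /orP[/andP[->]|/andP[_ ->]] //; rewrite orbT. Qed.
Lemma joins_inc2 f u w : joins f u w -> incident src dst f w.
Proof. by rewrite /joins /incident => /orP[/andP[_ ->]|/andP[->]] //; rewrite orbT. Qed.

Lemma edgeAt_mate v : edgeAt (mate v) = edgeAt v.
Proof.
case: (edgeAt_spec v) => fM _.
by symmetry; apply: edgeAt_uniq => //; apply: joins_inc2 (mate_joins v).
Qed.

Lemma mateK v : mate (mate v) = v.
Proof.
have := mate_joins v; have := Hll (edgeAt v).
rewrite /mate edgeAt_mate /joins.
case: (src _ =P v) => [->|ns] /=; first by rewrite eq_sym => /negbTE ->.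
by rewrite eqxx => _ /andP[_ /eqP].
Qed.

Lemma mate_neq v : mate v != v.
Proof.
have := mate_joins v; have := Hll (edgeAt v); rewrite /joins.
move=> nl /orP[]/andP[/eqP E1 /eqP E2]; move: nl; by rewrite E1 E2 // eq_sym.
Qed.

Lemma mate_inj : injective mate.
Proof. exact: (can_inj mateK). Qed.

Lemma joins_mate v f w : f \in M -> joins f v w -> w = mate v.
Proof.
move=> fM J; have Ef : f = edgeAt v by apply: edgeAt_uniq => //; apply: joins_inc1 J.
have := mate_joins v; rewrite -Ef; move: J (Hll f); rewrite /joins.
move=> /orP[]/andP[/eqP ? /eqP ?] /eqP nl /orP[]/andP[/eqP ? /eqP ?]; congruence.
Qed.

End Match.
Set Implicit Arguments. Unset Strict Implicit. Unset Printing Implicit Defensive.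

Section Comp.
Variables (V E : finType) (src dst : E -> V).
Hypothesis Hll : loopless src dst.
Variables (F : {set E}) (S : {set V}).

Let r := adjIn src dst F (~: S).
Definition comp v := [set u | (u \in ~: S) && connect r v u].

Lemma adj_sym : symmetric r.
Proof.
move=> x y; rewrite /r /adjIn andbCA; congr (_ && (_ && _)).
by apply: eq_existsb => f; rewrite orbC.
Qed.

Lemma adj_in x y : r x y -> (x \in ~: S) && (y \in ~: S).
Proof. by rewrite /r /adjIn => /and3P[-> ->]. Qed.

Lemma comp_self v : v \in ~: S -> v \in comp v.
Proof. by move=> Hv; rewrite inE Hv connect0. Qed.

Lemma comp_eq u v : u \in comp v -> comp u = comp v.
Proof.
rewrite inE => /andP[_ Hc]; apply/setP=> w; rewrite !inE.
case: (w \in S) => //=; apply/idP/idP => H.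
  exact: connect_trans Hc H.
rewrite (sym_connect_sym adj_sym) in Hc.
exact: connect_trans Hc H.
Qed.

Lemma compsP C : reflect (exists2 v, v \in ~: S & C = comp v) (C \in components_minus src dst F S).
Proof. by apply: (iffP imsetP). Qed.

Lemma comp_closed v : closed r (mem (comp v)).
Proof.
move=> x y Hr; rewrite !inE.
have /andP[] := adj_in Hr; rewrite !inE => -> -> /=.
apply/idP/idP => H; first exact: connect_trans H (connect1 Hr).
by apply: connect_trans H (connect1 _); rewrite adj_sym.
Qed.

Lemma tutte_upper (M : {set E}) (e0 : E) (x0 : V) :
  perfect_matching src dst F M -> odd_components src dst F S <= #|S|.
Proof.
move=> HM.
pose mt := mate src dst M e0.
pose O := [set C in components_minus src dst F S | odd #|C|].
have key : forall C, C \in O -> exists2 s, s \in S & mt s \in C.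
  move=> C; rewrite inE => /andP[/compsP[v Hv ->] Hodd].
  case: (boolP [exists s in S, mt s \in comp v]) => [/exists_inP[s ??]|Hno]; first by exists s.
  exfalso; suff : ~~ odd #|comp v| by rewrite Hodd.
  apply: (@invol_even _ mt (mateK Hll e0 HM) (mate_neq Hll e0 HM) #|comp v|) => // u Hu.
  have Hms : mt u \notin S.
    apply/negP=> Hs; move/negP: Hno; apply; apply/exists_inP; exists (mt u) => //.
    by rewrite /mt (mateK Hll e0 HM).
  have Hr : r u (mt u).
    have /andP[uS _] : (u \in ~: S) && true by move: Hu; rewrite inE => /andP[->].
    rewrite /r /adjIn uS inE Hms /=.
    apply/existsP; exists (edgeAt src dst M e0 u).
    have [fM _] := edgeAt_spec e0 HM u.
    have [sMF _] := HM. rewrite (subsetP sMF) //=.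
    exact: (mate_joins e0 HM).
  by have := comp_closed v Hr; rewrite Hu => <-.
pose phi (C : {set V}) := odflt x0 [pick s in S | mt s \in C].
have phiP : forall C, C \in O -> phi C \in S /\ mt (phi C) \in C.
  move=> C HC; rewrite /phi; case: pickP => [s /andP[]|Hn] //=.
  by have [s Hs Hm] := key C HC; have := Hn s; rewrite Hs Hm.
have inj : {in O &, injective phi}.
  move=> C D HC HD Ep.
  have [_ h1] := phiP C HC; have [_ h2] := phiP D HD.
  rewrite Ep in h1.
  move: HC HD h1 h2; rewrite !inE => /andP[/compsP[v _ ->] _] /andP[/compsP[w _ ->] _] h1 h2.
  by rewrite -(comp_eq h1) (comp_eq h2).
rewrite /odd_components -/O -(card_in_imset inj).
apply: subset_leq_card; apply/subsetP=> s /imsetP[C HC ->].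
by case: (phiP C HC).
Qed.

Lemma parity_comp n (Y : {set V}) : #|Y| <= n -> Y \subset ~: S -> closed r (mem Y) ->
  odd #|Y| -> exists2 v, v \in Y & odd #|comp v|.
Proof.
elim: n Y => [|n IH] Y HY sY cY oY.
  have E0 : #|Y| = 0 by lia.
  by rewrite E0 in oY.
case: (set_0Vmem Y) => [Y0|[v Hv]]; first by rewrite Y0 cards0 in oY.
case: (boolP (odd #|comp v|)) => Hc; first by exists v.
have sCY : comp v \subset Y.
  apply/subsetP=> u; rewrite inE => /andP[_ Hc'].
  by rewrite -(closed_connect cY Hc').
pose Y' := Y :\: comp v.
have cv : 0 < #|comp v|.
  by rewrite card_gt0; apply/set0Pn; exists v; apply: comp_self; apply: (subsetP sY).
have eY : #|Y'| = #|Y| - #|comp v| by rewrite cardsDS.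
have hcY := subset_leq_card sCY.
have [|||w Hw Ho] := IH Y' ltac:(lia).
- by apply: subset_trans sY; apply: subsetDl.
- move=> x y Hr; rewrite !inE.
  have := comp_closed v Hr; rewrite !inE => ->.
  by rewrite (cY x y Hr).
- move: oY Hc; have -> : #|Y| = #|comp v| + #|Y'| by lia.
  by rewrite oddD; case: (odd #|comp v|); case: (odd #|Y'|).
- by exists w => //; move: Hw; rewrite inE => /andP[].
Qed.


Lemma tutte_lower (X Y : {set V}) : X :|: Y = ~: S -> [disjoint X & Y] ->
  (forall x u, x \in X -> ~~ adjIn src dst F (~: S) x u) -> odd #|Y| ->
  #|X| + 1 <= odd_components src dst F S.
Proof.
move=> eXY dXY iso oY.
have sY : Y \subset ~: S by rewrite -eXY subsetUr.
have cY : closed r (mem Y).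
  move=> x y Hr.
  have /andP[xS yS] := adj_in Hr.
  have nx : x \notin X by apply/negP=> Hx; move/negP: (iso x y Hx); apply.
  have ny : y \notin X.
    by apply/negP=> Hy; move/negP: (iso y x Hy); apply; change (r y x); rewrite adj_sym.
  have inY : forall z, z \in ~: S -> z \notin X -> z \in Y.
    by move=> z; rewrite -eXY inE => /orP[->|].
  have hx := inY x xS nx; have hy := inY y yS ny.
  by apply/idP/idP => _; [exact: hy|exact: hx].
have [v Hv Ho] := parity_comp (leqnn #|Y|) sY cY oY.
have compX : forall x, x \in X -> comp x = [set x].
  move=> x Hx; apply/setP=> u; rewrite !inE.
  apply/andP/eqP => [[_ /connectP[p]]|->].
    case: p => [_ ->|y p] //=.
    by case/andP=> Hr; have := iso x y Hx; move/negP => /(_ Hr).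
  split; last exact: connect0.
  have : x \in X :|: Y by rewrite inE Hx.
  by rewrite eXY inE.
have sub : (set1 @: X) :|: [set comp v] \subset [set C in components_minus src dst F S | odd #|C|].
  apply/subsetP=> C; rewrite !inE => /orP[/imsetP[x Hx ->]|/eqP ->].
    have xS : x \in ~: S by rewrite -eXY inE Hx.
    rewrite cards1 andbT; apply/compsP; exists x => //; by rewrite compX.
  rewrite Ho andbT; apply/compsP; exists v => //; exact: (subsetP sY).
have nin : comp v \notin set1 @: X.
  apply/negP=> /imsetP[x Hx Ex].
  have : v \in comp v by apply: comp_self; exact: (subsetP sY).
  rewrite Ex inE => /eqP Evx; subst.
  by move: (disjointFr dXY Hx); rewrite Hv.
have := subset_leq_card sub.
rewrite setUC /odd_components cardsU1 nin (card_imset _ set1_inj) /=.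
by rewrite addnC.
Qed.

Lemma barrier_of (M : {set E}) (X Y : {set V}) :
  perfect_matching src dst F M -> X :|: Y = ~: S -> [disjoint X & Y] ->
  (forall x u, x \in X -> ~~ adjIn src dst F (~: S) x u) -> odd #|Y| ->
  #|S| = #|X| + 1 -> barrier src dst F S.
Proof.
move=> HM eXY dXY iso oY cS.
have [s _] : exists s, s \in S.
  by case: (set_0Vmem S) => [S0|[s Hs]]; [rewrite S0 cards0 addn1 in cS|exists s].
have e0 : E.
  case: HM => _ [_ H]; move: (H s (in_setT s)).
  by case: (set_0Vmem [set f in M | incident src dst f s]) => [->|[f _]] //; rewrite cards0.
split; first by exists M.
split.
  by rewrite -card_gt0 cS addn1.
apply/eqP; rewrite eqn_leq; apply/andP; split.
  exact: (tutte_upper e0 s HM).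
by rewrite cS; apply: (tutte_lower eXY dXY iso oY).
Qed.

End Comp.
Set Implicit Arguments. Unset Strict Implicit. Unset Printing Implicit Defensive.

Section Gen.
Variables (V E : finType) (src dst : E -> V).

Lemma joins_cases f x u : joins src dst f x u ->
  (src f = x /\ dst f = u) \/ (src f = u /\ dst f = x).
Proof. by case/orP=> /andP[/eqP -> /eqP ->]; [left|right]. Qed.

Lemma pm_mono (F1 F2 M : {set E}) : perfect_matching src dst F1 M -> F1 \subset F2 ->
  perfect_matching src dst F2 M.
Proof. by case=> s [h1 h2] sF; split; [exact: subset_trans s sF|split]. Qed.

Lemma adjIn_mono (F1 F2 : {set E}) S x y : F1 \subset F2 ->
  adjIn src dst F1 S x y -> adjIn src dst F2 S x y.
Proof.
move=> sF /and3P[Hx Hy /existsP[f /andP[fF J]]].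
by rewrite /adjIn Hx Hy /=; apply/existsP; exists f; rewrite (subsetP sF) // J.
Qed.

Lemma conn_mono (F1 F2 : {set E}) S : F1 \subset F2 -> connected_on src dst F1 S ->
  connected_on src dst F2 S.
Proof.
move=> sF C u v Hu Hv; have := C u v Hu Hv.
move/connectP=> [p Hp ->]; apply/connectP; exists p => //.
by apply: sub_path Hp => x y; apply: adjIn_mono.
Qed.

Lemma mc_pm (F : {set E}) : matching_covered src dst F -> exists M, perfect_matching src dst F M.
Proof.
case=> C [c2 Ad].
have [u _] : exists u : V, u \in [set: V].
  by case: (set_0Vmem [set: V]) => [S0|[u Hu]]; [rewrite -cardsT S0 cards0 in c2|exists u].
have [v nv] : exists v, v != u.
  have : 0 < #|[set: V] :\ u|. have := cardsD1 u [set: V]; rewrite cardsT inE /= => H; rewrite H in c2; lia.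
  by rewrite card_gt0 => /set0Pn[v]; rewrite !inE andbT => nv; exists v.
have := C u v (in_setT u) (in_setT v) => /connectP[[|x p] /=]; first by move=> _ Ev; rewrite Ev eqxx in nv.
case/andP=> /and3P[_ _ /existsP[f /andP[fF _]]] _ _.
by have [M [HM _]] := Ad f fF; exists M.
Qed.

End Gen.

Section Setting.
Variables (V E : finType) (src dst : E -> V).
Variables (F : {set E}) (e1 e2 e : E) (U W : {set V}).
Hypothesis Hll : loopless src dst.
Hypothesis HW : W = ~: U.
Hypothesis Hcross : forall f, f \in F :\: [set e1; e2] -> (src f \in U) != (dst f \in U).
Hypothesis Ha : src e1 \in U.
Hypothesis Ha' : dst e1 \in U.
Hypothesis Hb : src e2 \in W.
Hypothesis Hb' : dst e2 \in W.
Hypothesis He : e \notin [set e1; e2].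

Lemma inW v : (v \in W) = (v \notin U).
Proof. by rewrite HW inE. Qed.

Lemma edge_cases f : f \in F -> f = e1 \/ f = e2 \/
  (f \in F :\: [set e1; e2] /\ ((src f \in U) != (dst f \in U))).
Proof.
move=> fF; case: (f =P e1) => [->|n1]; first by left.
case: (f =P e2) => [->|n2]; first by right; left.
right; right.
have fH : f \in F :\: [set e1; e2] by rewrite !inE fF andbT; apply/norP; split; apply/eqP.
by split => //; apply: Hcross.
Qed.

Section Part2.
Variables (A1 A2 B1 B2 : {set V}).
Hypotheses (hA : A1 :|: A2 = U) (dA : [disjoint A1 & A2])
  (hB : B1 :|: B2 = W) (dB : [disjoint B1 & B2])
  (c1 : #|B1| = #|A1| + 1) (c2 : #|A2| = #|B2| + 1)
  (EA2 : edges_in src dst F A2 = [set e1]) (EB1 : edges_in src dst F B1 = [set e2])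
  (EAB : edges_between src dst F A1 B2 = [set e]).

Lemma four v : [/\ (v \in A1) || (v \in A2) = (v \in U),
  (v \in B1) || (v \in B2) = ~~ (v \in U), ~~ ((v \in A1) && (v \in A2)) &
  ~~ ((v \in B1) && (v \in B2))].
Proof.
split.
- by rewrite -hA inE.
- by rewrite -inW -hB inE.
- by apply/negP=> /andP[h1 h2]; move: (disjointFr dA h1); rewrite h2.
- by apply/negP=> /andP[h1 h2]; move: (disjointFr dB h1); rewrite h2.
Qed.

Ltac fourcase v := let H := fresh "H" in have H := four v; case: H;
  case: (v \in A1); case: (v \in A2); case: (v \in B1); case: (v \in B2); case: (v \in U).

Lemma e1_in : src e1 \in A2 /\ dst e1 \in A2.
Proof.
have : e1 \in edges_in src dst F A2 by rewrite EA2 set11.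
by rewrite inE /inside => /andP[_ /andP[]].
Qed.
Lemma e2_in : src e2 \in B1 /\ dst e2 \in B1.
Proof.
have : e2 \in edges_in src dst F B1 by rewrite EB1 set11.
by rewrite inE /inside => /andP[_ /andP[]].
Qed.

Lemma between_e f x y : f \in F -> joins src dst f x y -> x \in A1 -> y \in B2 -> f = e.
Proof.
move=> fF J hx hy; apply/set1P; rewrite -EAB inE fF /=.
by case: (joins_cases J) => [[-> ->]|[-> ->]]; rewrite hx hy ?orbT.
Qed.

Lemma iso_A1 x u : x \in A1 -> ~~ adjIn src dst (F :\ e) (~: B1) x u.
Proof.
have [s1 d1] := e1_in. have [s2 d2] := e2_in.
move=> hx; apply/negP => /and3P[_ hu /existsP[f /andP[fF J]]].
move: fF; rewrite !inE => /andP[nfe fF].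
rewrite inE in hu.
case: (edge_cases fF) => [Ef|[Ef|[fH cr]]].
- subst f; case: (joins_cases J) => [[Ex _]|[_ Ex]]; subst x.
  + by move: hx s1; fourcase (src e1).
  + by move: hx d1; fourcase (dst e1).
- subst f; case: (joins_cases J) => [[Ex _]|[_ Ex]]; subst x.
  + by move: hx s2; fourcase (src e2).
  + by move: hx d2; fourcase (dst e2).
- case: (joins_cases J) => [[Ex Eu]|[Eu Ex]]; rewrite Ex Eu in cr.
  + have uB2 : u \in B2 by move: hx hu cr; fourcase x; fourcase u.
    by move/eqP: nfe; apply; apply: (between_e fF J).
  + have uB2 : u \in B2 by move: hx hu cr; fourcase x; fourcase u.
    by move/eqP: nfe; apply; apply: (between_e fF J).
Qed.


Lemma iso_B2 y u : y \in B2 -> ~~ adjIn src dst (F :\ e) (~: A2) y u.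
Proof.
have [s1 d1] := e1_in. have [s2 d2] := e2_in.
move=> hy; apply/negP => /and3P[_ hu /existsP[f /andP[fF J]]].
move: fF; rewrite !inE => /andP[nfe fF].
rewrite inE in hu.
case: (edge_cases fF) => [Ef|[Ef|[fH cr]]].
- subst f; case: (joins_cases J) => [[Ex _]|[_ Ex]]; subst y.
  + by move: hy s1; fourcase (src e1).
  + by move: hy d1; fourcase (dst e1).
- subst f; case: (joins_cases J) => [[Ex _]|[_ Ex]]; subst y.
  + by move: hy s2; fourcase (src e2).
  + by move: hy d2; fourcase (dst e2).
- have J' : joins src dst f u y by move: J; rewrite /joins orbC.
  case: (joins_cases J) => [[Ex Eu]|[Eu Ex]]; rewrite Ex Eu in cr.
  + have uA1 : u \in A1 by move: hy hu cr; fourcase y; fourcase u.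
    by move/eqP: nfe; apply; apply: (between_e fF J').
  + have uA1 : u \in A1 by move: hy hu cr; fourcase y; fourcase u.
    by move/eqP: nfe; apply; apply: (between_e fF J').
Qed.

Lemma part2 (M : {set E}) : perfect_matching src dst (F :\ e) M ->
  barrier src dst (F :\ e) B1 /\ barrier src dst (F :\ e) A2.
Proof.
move=> HM; split.
- apply: (barrier_of (X := A1) (Y := A2 :|: B2) Hll HM) => //.
  + by apply/setP=> v; rewrite !inE; fourcase v.
  + by rewrite -setI_eq0; apply/eqP/setP => v; rewrite !inE; fourcase v.
  + exact: iso_A1.
  + rewrite cardsU.
    have -> : A2 :&: B2 = set0 by apply/setP => v; rewrite !inE; fourcase v.
    by rewrite cards0 subn0 c2 addnAC addnn oddD odd_double.
- apply: (barrier_of (X := B2) (Y := A1 :|: B1) Hll HM) => //.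
  + by apply/setP=> v; rewrite !inE; fourcase v.
  + by rewrite -setI_eq0; apply/eqP/setP => v; rewrite !inE; fourcase v.
  + exact: iso_B2.
  + rewrite cardsU.
    have -> : A1 :&: B1 = set0 by apply/setP => v; rewrite !inE; fourcase v.
    by rewrite cards0 subn0 c1 addnA addnn oddD odd_double.
Qed.
End Part2.
End Setting.
Set Implicit Arguments. Unset Strict Implicit. Unset Printing Implicit Defensive.

Lemma arith_aux (u w x b : nat) : u = w -> b = x + 1 -> b <= w -> u - x = w - b + 1.
Proof. lia. Qed.

Lemma setUDK' (T : finType) (A B : {set T}) : A \subset B -> A :|: B :\: A = B.
Proof.
move=> sAB; apply/setP=> v; rewrite !inE.
by case: (boolP (v \in A)) => hv //=; rewrite (subsetP sAB).
Qed.

Lemma disj_D (T : finType) (A B : {set T}) : [disjoint A & B :\: A].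
Proof. by rewrite -setI_eq0; apply/eqP/setP=> v; rewrite !inE; case: (v \in A). Qed.

Section P1.
Variables (V E : finType) (src dst : E -> V).
Variables (F : {set E}) (e1 e2 e : E) (U W : {set V}).
Hypothesis Hll : loopless src dst.
Hypothesis Hbr : brick src dst F.
Hypothesis Hrd : removable_doubleton src dst F e1 e2.
Hypothesis HW : W = ~: U.
Hypothesis Hcross : forall f, f \in F :\: [set e1; e2] -> (src f \in U) != (dst f \in U).
Hypothesis Ha : src e1 \in U.
Hypothesis Ha' : dst e1 \in U.
Hypothesis Hb : src e2 \in W.
Hypothesis Hb' : dst e2 \in W.
Hypothesis He : e \notin [set e1; e2].
Hypothesis Hnr : nonremovable src dst F e.
Hypothesis Hrem : removable src dst (F :\: [set e1; e2]) e.

Let H := F :\: [set e1; e2].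

Lemma inW' v : (v \in W) = (v \notin U).
Proof. by rewrite HW inE. Qed.

Lemma cross_joins f v w : f \in H -> joins src dst f v w -> (v \in U) != (w \in U).
Proof.
move=> fH J; have := Hcross fH.
by case: (joins_cases J) => [[-> ->]|[-> ->]] //; rewrite eq_sym.
Qed.

Lemma edge_cases' f : f \in F -> f = e1 \/ f = e2 \/
  (f \in F :\: [set e1; e2] /\ ((src f \in U) != (dst f \in U))).
Proof.
move=> fF; case: (f =P e1) => [->|n1]; first by left.
case: (f =P e2) => [->|n2]; first by right; left.
right; right.
have fH : f \in F :\: [set e1; e2] by rewrite !inE fF andbT; apply/norP; split; apply/eqP.
by split => //; apply: Hcross.
Qed.

Lemma e1F : e1 \in F. Proof. by case: Hrd. Qed.
Lemma e2F : e2 \in F. Proof. by case: Hrd => _ []. Qed.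
Lemma eH : e \in H. Proof. by case: Hrem. Qed.
Lemma eF : e \in F. Proof. by have := eH; rewrite inE => /andP[]. Qed.
Lemma ne1 : e != e1. Proof. by move: He; rewrite !inE negb_or => /andP[]. Qed.
Lemma ne2 : e != e2. Proof. by move: He; rewrite !inE negb_or => /andP[]. Qed.

Lemma inH f : f \in F -> f != e1 -> f != e2 -> f \in H.
Proof. by move=> fF n1 n2; rewrite !inE fF negb_or n1 n2. Qed.

Lemma UW_card : #|U| = #|W|.
Proof.
have [M0 HM0] := mc_pm (proj2 Hrem).
have sub : forall v, (mate src dst M0 e v \in U) != (v \in U).
  move=> v; have [fM _] := edgeAt_spec e HM0 v.
  have fH : edgeAt src dst M0 e v \in H.
    by case: HM0 => sM _; have := subsetP sM _ fM; rewrite inE => /andP[].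
  by rewrite eq_sym; apply: cross_joins fH (mate_joins e HM0 v).
apply/eqP; rewrite eqn_leq; apply/andP; split.
  rewrite -[#|U|](card_imset _ (@mate_inj _ _ _ _ Hll _ _ e HM0)); apply: subset_leq_card.
  apply/subsetP=> w /imsetP[v Hv ->]; rewrite inW'; have := sub v; rewrite Hv.
  by case: (_ \in U).
rewrite -[#|W|](card_imset _ (@mate_inj _ _ _ _ Hll _ _ e HM0)); apply: subset_leq_card.
apply/subsetP=> w /imsetP[v Hv ->]; have := sub v; rewrite inW' in Hv; move: Hv.
by case: (v \in U); case: (_ \in U).
Qed.

Lemma no_pm_e1 M : perfect_matching src dst (F :\ e) M -> e1 \in M -> e2 \in M -> False.
Proof.
move=> HM h1 h2; case: Hnr => _; apply.
have sHF : H :\ e \subset F :\ e.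
  by apply/subsetP=> f; rewrite !inE => /andP[-> /andP[_ ->]].
have [C [c2 Ad]] := proj2 Hrem.
split; first exact: conn_mono sHF C.
split => // f fF.
case: (boolP (f \in [set e1; e2])) => fe.
  by exists M; split => //; move: fe; rewrite !inE => /orP[] /eqP ->.
have fH : f \in H :\ e by move: fF fe; rewrite !inE => /andP[-> ->] ->.
have [M' [HM' fM']] := Ad f fH.
by exists M'; split => //; apply: pm_mono HM' sHF.
Qed.


Let A := U :\: [set src e1; dst e1].
Let B := W :\: [set src e2; dst e2].
Let R : rel V := fun u w => (w \in B) && [exists f in F :\ e, joins src dst f u w].

Lemma cardA : #|A| + 2 = #|U|.
Proof.
rewrite /A cardsDS ?subUset ?sub1set ?Ha ?Ha' // cards2 Hll.
have : #|[set src e1; dst e1]| <= #|U| by apply: subset_leq_card; rewrite subUset !sub1set Ha Ha'.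
by rewrite cards2 Hll; lia.
Qed.

Lemma cardB : #|B| + 2 = #|W|.
Proof.
rewrite /B cardsDS ?subUset ?sub1set ?Hb ?Hb' // cards2 Hll.
have : #|[set src e2; dst e2]| <= #|W| by apply: subset_leq_card; rewrite subUset !sub1set Hb Hb'.
by rewrite cards2 Hll; lia.
Qed.

Lemma cardAB : #|A| = #|B|.
Proof. have := cardA; have := cardB; rewrite UW_card; lia. Qed.

Lemma pm_from_g (g : V -> V) : {in A &, injective g} -> (forall x, x \in A -> R x (g x)) -> False.
Proof.
move=> ig rg.
pose h u := odflt e [pick f in F :\ e | joins src dst f u (g u)].
have hP : forall u, u \in A -> h u \in F :\ e /\ joins src dst (h u) u (g u).
  move=> u Hu; rewrite /h; case: pickP => [f /andP[]|Hn] //=.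
  have /andP[_ /exists_inP[f fF J]] := rg u Hu.
  by have := Hn f; rewrite fF J.
have gB : forall u, u \in A -> g u \in B by move=> u /rg /andP[].
have gAB : g @: A = B.
  apply/eqP; rewrite eqEcard card_in_imset // -cardAB leqnn andbT.
  by apply/subsetP=> w /imsetP[u Hu ->]; apply: gB.
pose M := h @: A :|: [set e1; e2].
have Mcases : forall f, f \in M -> f = e1 \/ f = e2 \/ exists2 u, u \in A & f = h u.
  move=> f; rewrite !inE => /orP[/imsetP[u Hu ->]|/orP[/eqP ->|/eqP ->]]; by [right; right; exists u| left| right; left].
have AU : forall v, v \in A -> v \in U by move=> v; rewrite inE => /andP[].
have BW : forall v, v \in B -> v \in W by move=> v; rewrite inE => /andP[].
have AnotW : forall v, v \in U -> v \in W -> False by move=> v; rewrite inW' => ->.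
have inc_h : forall u v, u \in A -> incident src dst (h u) v -> v = u \/ v = g u.
  move=> u v Hu; have [_ J] := hP u Hu; rewrite /incident.
  by case: (joins_cases J) => [[-> ->]|[-> ->]] /orP[] /eqP ->; auto.
have inc2 : forall f v, incident src dst f v -> v = src f \/ v = dst f.
  by move=> f v; rewrite /incident => /orP[] /eqP ->; auto.
have HM : perfect_matching src dst (F :\ e) M.
  split.
    apply/subsetP=> f /Mcases [->|[->|[u Hu ->]]]; last by case: (hP u Hu).
      by rewrite !inE e1F eq_sym ne1.
    by rewrite !inE e2F eq_sym ne2.
  split; first by move=> f _; rewrite /inside !inE.
  move=> v _.
  have e1M : e1 \in M by rewrite !inE eqxx orbT.
  have e2M : e2 \in M by rewrite !inE eqxx !orbT.
  have hM : forall u, u \in A -> h u \in M by move=> u Hu; rewrite inE (imset_f h Hu).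
  case: (boolP (v \in U)) => vU.
  - case: (boolP (v \in [set src e1; dst e1])) => ve.
    + apply: (pm_card1 F e1M); first by move: ve; rewrite /incident !inE (eq_sym (src e1)) (eq_sym (dst e1)).
      move=> f /Mcases [->|[->|[u Hu ->]]] // finc.
        by case: (inc2 _ _ finc) => Ev; subst v; [case: (AnotW _ vU Hb)|case: (AnotW _ vU Hb')].
      case: (inc_h u v Hu finc) => Ev; subst v.
        by move: Hu; rewrite inE ve.
      by case: (AnotW _ vU (BW _ (gB u Hu))).
    + have vA : v \in A by rewrite inE ve vU.
      apply: (pm_card1 F (hM v vA)).
        by have [_ J] := hP v vA; apply: joins_inc1 J.
      move=> f /Mcases [->|[->|[u Hu ->]]] finc.
      * by case: (inc2 _ _ finc) => Ev; subst v; rewrite !inE eqxx ?orbT in ve.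
      * by case: (inc2 _ _ finc) => Ev; subst v; [case: (AnotW _ vU Hb)|case: (AnotW _ vU Hb')].
      * case: (inc_h u v Hu finc) => Ev; subst v; first by [].
        by case: (AnotW _ vU (BW _ (gB u Hu))).
  - have vW : v \in W by rewrite inW'.
    case: (boolP (v \in [set src e2; dst e2])) => ve.
    + apply: (pm_card1 F e2M); first by move: ve; rewrite /incident !inE (eq_sym (src e2)) (eq_sym (dst e2)).
      move=> f /Mcases [->|[->|[u Hu ->]]] // finc.
        by case: (inc2 _ _ finc) => Ev; subst v; rewrite ?Ha ?Ha' in vU.
      case: (inc_h u v Hu finc) => Ev; subst v.
        by rewrite (AU _ Hu) in vU.
      by move: (gB u Hu); rewrite inE ve.
    + have vB : v \in B by rewrite inE ve vW.
      rewrite -gAB in vB; case/imsetP: vB => u0 Hu0 Ev.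
      apply: (pm_card1 F (hM u0 Hu0)).
        by have [_ J] := hP u0 Hu0; rewrite Ev; apply: joins_inc2 J.
      move=> f /Mcases [->|[->|[u Hu ->]]] finc.
      * by case: (inc2 _ _ finc) => Ev'; rewrite Ev' ?Ha ?Ha' in vU.
      * by case: (inc2 _ _ finc) => Ev'; subst v; rewrite Ev' !inE eqxx ?orbT in ve.
      * case: (inc_h u v Hu finc) => Ev'.
          by rewrite Ev' (AU _ Hu) in vU.
        by rewrite (ig u u0 Hu Hu0) // -Ev' -Ev.
apply: (no_pm_e1 HM); rewrite !inE eqxx ?orbT //.
Qed.


Lemma hall_fails : exists2 X : {set V}, X \subset A & #|nbh R X| < #|X|.
Proof.
case: (boolP [exists X : {set V}, (X \subset A) && (#|nbh R X| < #|X|)]) => [/existsP[X /andP[]] | Hn]; first by exists X.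
exfalso.
have Hh : forall X : {set V}, X \subset A -> #|X| <= #|nbh R X|.
  move=> X sX; rewrite leqNgt; apply/negP => lt; move/negP: Hn; apply; apply/existsP; exists X; by rewrite sX lt.
have [g [ig rg]] := hall (src e1) (leqnn #|A|) Hh.
exact: pm_from_g ig rg.
Qed.

Lemma pm_e1 : exists M1, perfect_matching src dst F M1 /\ e1 \in M1.
Proof.
case: Hbr => _ [_ hpm].
have [N [sNF [insN cntN]]] := hpm _ _ (Hll e1).
exists (e1 |: N); split; last by rewrite !inE eqxx.
split; first by rewrite subUset sub1set e1F sNF.
split; first by move=> f _; rewrite /inside !inE.
move=> v _.
case: (boolP (v \in [set src e1; dst e1])) => ve.
  apply: (pm_card1 F (f := e1)); first by rewrite !inE eqxx.
    by move: ve; rewrite /incident !inE (eq_sym (src e1)) (eq_sym (dst e1)).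
  move=> f; rewrite !inE => /orP[/eqP -> //|fN] finc.
  have := insN f fN; rewrite /inside !inE.
  move: finc ve; rewrite /incident !inE => /orP[] /eqP -> ve /andP[n1 n2].
    by rewrite ve in n1.
  by rewrite ve in n2.
have vin : v \in ~: [set src e1; dst e1] by rewrite inE.
suff -> : [set f in e1 |: N | incident src dst f v] = [set f in N | incident src dst f v].
  exact: cntN v vin.
apply/setP=> f; rewrite !inE.
case: (f =P e1) => [->|_] //=.
move: ve; rewrite /incident !inE negb_or => /andP[n1 n2].
by rewrite (eq_sym (src e1)) (eq_sym (dst e1)) (negbTE n1) (negbTE n2) andbF.
Qed.


Lemma part1 : exists A1 A2 B1 B2 : {set V},
     (A1 :|: A2 = U /\ [disjoint A1 & A2] /\ B1 :|: B2 = W /\ [disjoint B1 & B2] /\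
      #|B1| = #|A1| + 1 /\ #|A2| = #|B2| + 1 /\
      edges_in src dst F A2 = [set e1] /\ edges_in src dst F B1 = [set e2] /\
      edges_between src dst F A1 B2 = [set e]).
Proof.
have [X sXA ltX] := hall_fails.
have [M1 [HM1 e1M]] := pm_e1.
pose mt := mate src dst M1 e. pose ea := edgeAt src dst M1 e.
have eaS : forall v, ea v \in M1 /\ incident src dst (ea v) v := edgeAt_spec e HM1.
have eaU : forall v f, f \in M1 -> incident src dst f v -> f = ea v.
  by move=> v f; apply: (edgeAt_uniq e HM1).
have mj : forall v, joins src dst (ea v) v (mt v) := mate_joins e HM1.
have eam : forall v, ea (mt v) = ea v := edgeAt_mate e HM1.
have M1F : forall f, f \in M1 -> f \in F by case: HM1 => sM _ f /(subsetP sM).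
have AU : forall v, v \in A -> v \in U by move=> v; rewrite inE => /andP[].
have BW : forall v, v \in B -> v \in W by move=> v; rewrite inE => /andP[].
have UW : forall v, v \in U -> v \in W -> False by move=> v; rewrite inW' => ->.
have inc2 : forall f v, incident src dst f v -> v = src f \/ v = dst f.
  by move=> f v; rewrite /incident => /orP[] /eqP ->; auto.
have ea_e1 : forall v, v \in [set src e1; dst e1] -> ea v = e1.
  move=> v; rewrite !inE => hv; symmetry; apply: eaU => //.
  by rewrite /incident (eq_sym (src e1)) (eq_sym (dst e1)).
have cUW := UW_card.
have cA := cardA. have cB := cardB.
have e2M : e2 \in M1.
  case: (boolP (e2 \in M1)) => // n2; exfalso.
  have sub : mt @: W \subset A.
    apply/subsetP=> x /imsetP[w Hw ->].
    have [fM finc] := eaS w.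
    have n1 : ea w != e1.
      apply/eqP=> E1; rewrite E1 in finc.
      by case: (inc2 _ _ finc) => Ew; rewrite Ew ?Ha ?Ha' in Hw; apply: (UW _ _ Hw).
    have n2' : ea w != e2 by apply/eqP=> E2; rewrite -E2 fM in n2.
    have fH := inH (M1F _ fM) n1 n2'.
    have wU : (w \in U) = false by apply/negbTE; rewrite -inW'.
    have mU : mt w \in U by move: (cross_joins fH (mj w)); rewrite wU; case: (_ \in U).
    rewrite inE mU andbT; apply/negP => me.
    by move/eqP: n1; apply; rewrite -eam; apply: ea_e1.
  have := subset_leq_card sub.
  rewrite card_imset; last exact: (@mate_inj _ _ _ _ Hll _ _ e HM1).
  lia.
have ea_e2 : forall v, v \in [set src e2; dst e2] -> ea v = e2.
  move=> v; rewrite !inE => hv; symmetry; apply: eaU => //.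
  by rewrite /incident (eq_sym (src e2)) (eq_sym (dst e2)).
have noe12 : forall u, u \in A -> ea u \in H.
  move=> u Hu; have [fM finc] := eaS u.
  apply: inH; first exact: M1F.
    apply/eqP=> E1; rewrite E1 in finc; move: Hu; rewrite inE.
    by case: (inc2 _ _ finc) => ->; rewrite !inE eqxx ?orbT.
  apply/eqP=> E2; rewrite E2 in finc.
  by case: (inc2 _ _ finc) => Eu; move: (AU _ Hu); rewrite Eu => hU; [apply: (UW _ hU Hb)|apply: (UW _ hU Hb')].
have mtB : forall u, u \in A -> mt u \in B.
  move=> u Hu.
  have mW : mt u \in W.
    by move: (cross_joins (noe12 u Hu) (mj u)); rewrite (AU _ Hu) inW'; case: (_ \in U).
  rewrite inE mW andbT; apply/negP => me.
  have := noe12 u Hu; rewrite -eam (ea_e2 _ me) !inE eqxx orbT.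
  done.
have XA : forall u, u \in X -> u \in A by move=> u; apply: (subsetP sXA).
have nbh_of : forall u, u \in X -> ea u != e -> mt u \in nbh R X.
  move=> u Hu ne; rewrite inE; apply/existsP; exists u; rewrite Hu /= /R mtB ?XA //=.
  apply/exists_inP; exists (ea u); last exact: mj.
  by rewrite !inE ne; apply: M1F; case: (eaS u).
have [u0 Hu0 Eu0] : exists2 u0, u0 \in X & ea u0 = e.
  case: (boolP [exists u in X, ea u == e]) => [/exists_inP[u Hu /eqP]|Hn]; first by exists u.
  exfalso.
  have sub : mt @: X \subset nbh R X.
    apply/subsetP=> y /imsetP[u Hu ->]; apply: nbh_of => //.
    by apply/negP=> Eu; move/negP: Hn; apply; apply/exists_inP; exists u.
  have := subset_leq_card sub.
  rewrite card_imset; last exact: (@mate_inj _ _ _ _ Hll _ _ e HM1).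
  lia.
pose w0 := mt u0.
have Je : joins src dst e u0 w0 by rewrite -Eu0; apply: mj.
have w0B : w0 \in B by apply: mtB; apply: XA.
have u0U : u0 \in U by apply: AU; apply: XA.
have w0W : w0 \in W by apply: BW.
have sub1 : mt @: X \subset w0 |: nbh R X.
  apply/subsetP=> y /imsetP[u Hu ->]; rewrite inE.
  case: (ea u =P e) => [Eu|/eqP ne]; last by rewrite nbh_of ?orbT.
  have := (eaS u).2; rewrite Eu => inc.
  have : u = u0.
    case: (joins_cases Je) => [[Es Ed]|[Es Ed]]; case: (inc2 _ _ inc) => Ex; rewrite Ex ?Es ?Ed //.
    - by rewrite -Ed -Ex in w0W; case: (UW _ (AU _ (XA _ Hu)) w0W).
    - by rewrite -Es -Ex in w0W; case: (UW _ (AU _ (XA _ Hu)) w0W).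
  by move=> ->; rewrite inE eqxx.
have cX : #|X| <= #|nbh R X| + 1.
  have := subset_leq_card sub1.
  rewrite card_imset; last exact: (@mate_inj _ _ _ _ Hll _ _ e HM1).
  move=> h; apply: (leq_trans h); rewrite cardsU1 addnC leq_add2l; by case: (_ \notin _).
have w0n : w0 \notin nbh R X.
  apply/negP=> hw.
  have : mt @: X \subset nbh R X.
    by apply: subset_trans sub1 _; rewrite subUset sub1set hw subxx.
  move/subset_leq_card; rewrite card_imset; last exact: (@mate_inj _ _ _ _ Hll _ _ e HM1).
  by rewrite leqNgt ltX.
have nbhB : forall y, y \in nbh R X -> y \in B.
  by move=> y; rewrite inE => /exists_inP[x _ /andP[]].
have nbhB2 : forall y, y \in nbh R X -> y \notin [set src e2; dst e2].
  by move=> y hy; have := nbhB y hy; rewrite inE => /andP[].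
pose B1 := nbh R X :|: [set src e2; dst e2].
have XU : X \subset U by apply/subsetP=> u hu; exact: AU (XA u hu).
have B1W : B1 \subset W.
  apply/subsetP=> y; rewrite inE => /orP[hy|]; first exact: BW (nbhB y hy).
  by rewrite !inE => /orP[]/eqP->.
have XnE1 : forall u, u \in X -> u \notin [set src e1; dst e1].
  by move=> u hu; have := XA u hu; rewrite inE => /andP[].
have eX : #|X| = #|nbh R X| + 1 by apply/eqP; rewrite eqn_leq cX addn1 ltX.
have cB1 : #|B1| = #|X| + 1.
  have dnb : nbh R X :&: [set src e2; dst e2] = set0.
    apply/setP=> y; rewrite inE [y \in set0]inE.
    by case: (boolP (y \in nbh R X)) => //= /nbhB2 /negbTE.
  by rewrite /B1 cardsU dnb cards0 subn0 cards2 Hll eX -addnA.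
have cB1W := subset_leq_card B1W.
exists X, (U :\: X), B1, (W :\: B1).
split; first exact: setUDK' XU.
split; first exact: disj_D.
split; first exact: setUDK' B1W.
split; first exact: disj_D.
split; first exact: cB1.
split; first by rewrite (cardsDS XU) (cardsDS B1W); apply: arith_aux.
split.
  apply/setP=> f; rewrite !inE /inside !inE; apply/idP/eqP.
    case/and3P=> fF /andP[_ sU] /andP[_ dU].
    case: (edge_cases' fF) => [//|[Ef|[fH cr]]].
      by rewrite Ef in sU; case: (UW _ sU Hb).
    by rewrite sU dU in cr.
  move=> ->; rewrite e1F Ha Ha' !andbT /=.
  apply/andP; split; apply/negP => hx; move: (XnE1 _ hx); by rewrite !inE eqxx ?orbT.
split.
  apply/setP=> f; rewrite !inE /inside.
  have mB1 : forall y, y \in B1 -> y \in W by move=> y /(subsetP B1W).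
  apply/idP/eqP.
    case/and3P=> fF sB dB.
    case: (edge_cases' fF) => [Ef|[//|[fH cr]]].
      by have := mB1 _ sB; rewrite Ef => h; case: (UW _ Ha h).
    by move: cr; rewrite -(negbK (src f \in U)) -(negbK (dst f \in U)) -!inW' (mB1 _ sB) (mB1 _ dB).
  by move=> ->; rewrite e2F !inE !eqxx !orbT.
apply/setP=> f; rewrite /edges_between in_set in_set1.
have key : forall x y, f \in F -> joins src dst f x y -> x \in X -> y \in W :\: B1 -> f = e.
  move=> x y fF J hx; rewrite inE => /andP[yB1 yW].
  case: (edge_cases' fF) => [Ef|[Ef|[fH cr]]].
  - rewrite Ef in J; move: (XnE1 _ hx); rewrite !inE.
    by case: (joins_cases J) => [[<- _]|[_ <-]]; rewrite eqxx ?orbT.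
  - rewrite Ef in J; have xU := AU _ (XA _ hx).
    by case: (joins_cases J) => [[Ex _]|[_ Ex]]; rewrite -Ex in xU; [case: (UW _ xU Hb)|case: (UW _ xU Hb')].
  - case: (f =P e) => // /eqP ne; exfalso.
    have yB : y \in B.
      rewrite inE yW andbT; apply/negP => hy; move/negP: yB1; apply.
      by rewrite inE hy orbT.
    have : y \in nbh R X.
      rewrite inE; apply/exists_inP; exists x => //; rewrite /R yB /=.
      by apply/exists_inP; exists f => //; rewrite !inE ne fF.
    by move=> hy; move/negP: yB1; apply; rewrite inE hy.
apply/idP/eqP.
  case/andP=> fF /orP[]/andP[h1 h2].
    by apply: (key _ _ fF _ h1 h2); rewrite /joins !eqxx.
  by apply: (key _ _ fF _ h2 h1); rewrite /joins !eqxx orbT.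
move=> ->; rewrite eF /=.
have w0nB1 : w0 \in W :\: B1.
  rewrite inE w0W andbT inE negb_or w0n /=.
  by move: w0B; rewrite inE => /andP[].
case: (joins_cases Je) => [[-> ->]|[-> ->]]; by rewrite Hu0 w0nB1 ?orbT.
Qed.

End P1.
Unset Implicit Arguments.

Theorem mainTheorem6 (V E : finType) (src dst : E -> V)
  (F : {set E}) (e1 e2 e : E) (U W : {set V}) :
  loopless src dst ->
  brick src dst F ->
  removable_doubleton src dst F e1 e2 ->
  (* (U,W) is the bipartition of H = G - {e1,e2} *)
  W = ~: U ->
  (forall f, f \in F :\: [set e1; e2] -> (src f \in U) != (dst f \in U)) ->
  src e1 \in U -> dst e1 \in U -> src e2 \in W -> dst e2 \in W ->
  (* e is of type I *)
  e \notin [set e1; e2] ->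
  nonremovable src dst F e ->
  removable src dst (F :\: [set e1; e2]) e ->
  (exists A1 A2 B1 B2 : {set V},
     (A1 :|: A2 = U /\ [disjoint A1 & A2] /\ B1 :|: B2 = W /\ [disjoint B1 & B2] /\
      #|B1| = #|A1| + 1 /\ #|A2| = #|B2| + 1 /\
      edges_in src dst F A2 = [set e1] /\ edges_in src dst F B1 = [set e2] /\
      edges_between src dst F A1 B2 = [set e])) /\
  (forall A1 A2 B1 B2 : {set V},
     A1 :|: A2 = U -> [disjoint A1 & A2] -> B1 :|: B2 = W -> [disjoint B1 & B2] ->
     #|B1| = #|A1| + 1 -> #|A2| = #|B2| + 1 ->
     edges_in src dst F A2 = [set e1] -> edges_in src dst F B1 = [set e2] ->
     edges_between src dst F A1 B2 = [set e] ->
     barrier src dst (F :\ e) B1 /\ barrier src dst (F :\ e) A2).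
Proof.
move=> Hll Hbr Hrd HW Hcross Ha Ha' Hb Hb' He Hnr Hrem.
split; first by apply: part1.
move=> A1 A2 B1 B2 hA dA hB dB c1 c2 EA2 EB1 EAB.
have [M0 HM0] := mc_pm (proj2 Hrem).
have HM : perfect_matching src dst (F :\ e) M0.
  apply: pm_mono HM0 _; apply/subsetP=> f; rewrite !inE => /andP[-> /andP[_ ->]].
  by rewrite andbT.
exact: (part2 Hll HW Hcross hA dA hB dB c1 c2 EA2 EB1 EAB HM).
Qed.
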